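(* Under the hypotheses of the setting below (restriction $r=(\sigma^{\mathrm{ASY}}+\delta)\mathbf 1$ with $\delta>0$, Assumptions A, B, C), let $\epsilon_i>0$, $i=1,\dots,N$, be arbitrary. Then there exists a finite time $T_\delta>0$ such that for all $t\ge T_\delta$, $$\sum_{i=1}^Nc_i^\top x_i^t-J^{\mathrm{MILP}}\le\sum_{i=1}^N\big(c_i^\top x_i^t-J_i^{\mathrm{LP},t}\big)+\sum_{i=1}^N\|\mu_i^t\|_1\epsilon_i+\Gamma(\sigma^{\mathrm{ASY}}+\delta),$$ where $\Gamma=\frac{1}{\zeta_{\hat z}}\sum_{i=1}^N\big(\max_{x_i\in X_i}c_i^\top x_i-\min_{x_i\in X_i}c_i^\top x_i\big)$, $J^{\mathrm{MILP}}$ is the optimal cost of the MILP, and $J_i^{\mathrm{LP},t}=c_i^\top z_i^t+Mv_i^t$ is the optimal cost of (P1) at time $t$.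
   Context: Data: for each $i\in\{1,\dots,N\}$, $c_i\in\mathbb{R}^{n_i}$, $A_i\in\mathbb{R}^{S\times n_i}$ (rows $A_i^s$), nonempty compact $X_i=\{x_i\in\mathbb{Z}^{Z_i}\times\mathbb{R}^{R_i}:D_ix_i\preceq d_i\}$; $b\in\mathbb{R}^S$ with components $b_s$. $\preceq$ is componentwise, $\mathbf 1$ the all-ones vector. MILP: minimize $\sum_ic_i^\top x_i$ s.t. $\sum_iA_ix_i\preceq b$, $x_i\in X_i$ (assumed feasible). Restricted LP (LP$_r$): minimize $\sum_ic_i^\top z_i$ s.t. $\sum_iA_iz_i\preceq b-r$, $z_i\in\mathrm{conv}(X_i)$. Restriction: $L_i^s=\min_{x_i\in X_i}A_i^sx_i$; $(x_i^L,\tilde\ell_i)$ optimal for minimize $\ell_i$ over $x_i\in X_i,\ell_i\in\mathbb{R}$ s.t. $A_ix_i-L_i\preceq\ell_i\mathbf 1$; $\sigma^{\mathrm{ASY}}=(S+1)\max_i\max_s(A_i^sx_i^L-L_i^s)$; here $r=(\sigma^{\mathrm{ASY}}+\delta)\mathbf 1$ for a fixed $\delta>0$. Assumption A: (LP$_r$) is feasible with unique optimal solution. Assumption B: step-sizes $\alpha^t\ge0$, $\sum_t\alpha^t=\infty$, $\sum_t(\alpha^t)^2<\infty$. Assumption C (Slater): there exist $\hat z_i\in\mathrm{conv}(X_i)$ with $\zeta_{\hat z}:=\min_s\big(b_s-r_s-\sum_iA_i^s\hat z_i\big)>0$. Algorithm over a connected undirected graph with neighbor sets $\mathcal N_i$,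 parameter $M>0$ sufficiently large, initialization $\sum_iy_i^0=b-r$. At each $t$, agent $i$: (P1) computes a primal-dual optimal pair $((z_i^t,v_i^t),\mu_i^t)$ of: minimize $c_i^\top z_i+Mv_i$ over $z_i\in\mathrm{conv}(X_i)$, $v_i\ge0$, s.t. $A_iz_i\preceq y_i^t+v_i\mathbf 1$ ($\mu_i^t$ the multiplier of this constraint); (P2) $y_i^{t+1}=y_i^t+\alpha^t\sum_{j\in\mathcal N_i}(\mu_i^t-\mu_j^t)$; (P3) computes $x_i^t$ via: minimize lexicographically $(\rho_i,\xi_i)$ over $x_i\in X_i,\rho_i\ge0,\xi_i$ s.t. $c_i^\top x_i\le\xi_i$, $A_ix_i\preceq y_i^t+\rho_i\mathbf 1$ (first minimize $\rho_i$, then $c_i^\top x_i$ with $\rho_i$ fixed at its minimum). *)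

(* Defs.v *)
From Stdlib Require Import Reals Lra Lia ZArith Relations.
Open Scope R_scope.

(* Vectors of R^n are represented as functions nat -> R; only the
   coordinates k < n are meaningful. *)
Definition vec := nat -> R.

Fixpoint rsum (n : nat) (f : nat -> R) : R :=
  match n with O => 0 | S m => rsum m f + f m end.

Definition dot (n : nat) (u x : vec) : R := rsum n (fun k => u k * x k).
Definition norm1 (n : nat) (u : vec) : R := rsum n (fun k => Rabs (u k)).

Definition is_min_value {T : Type} (P : T -> Prop) (f : T -> R) (m : R) : Prop :=
  (exists x, P x /\ f x = m) /\ forall x, P x -> m <= f x.
Definition is_max_value {T : Type} (P : T -> Prop) (f : T -> R) (m : R) : Prop :=
  (exists x, P x /\ f x = m) /\ forall x, P x -> f x <= m.

(* X = { x in Z^nz x R^nr : D x <= d }, D having nd rows D l *)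
Definition mixed_int_poly (nz nr nd : nat) (D : nat -> vec) (d : vec) (x : vec) : Prop :=
  (forall k, (k < nz)%nat -> exists q : Z, x k = IZR q) /\
  (forall l, (l < nd)%nat -> dot (nz + nr) (D l) x <= d l).

Definition in_conv (n : nat) (X : vec -> Prop) (z : vec) : Prop :=
  exists (m : nat) (w : nat -> R) (p : nat -> vec),
    (forall j, (j < m)%nat -> 0 <= w j /\ X (p j)) /\
    rsum m w = 1 /\
    forall k, (k < n)%nat -> z k = rsum m (fun j => w j * p j k).

(* compactness in R^n (Heine-Borel: closed and bounded) *)
Definition bounded_set (n : nat) (X : vec -> Prop) : Prop :=
  exists B, forall x, X x -> forall k, (k < n)%nat -> Rabs (x k) <= B.
Definition closed_set (n : nat) (X : vec -> Prop) : Prop :=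
  forall (xs : nat -> vec) (x : vec), (forall m, X (xs m)) ->
    (forall k, (k < n)%nat -> Un_cv (fun m => xs m k) (x k)) -> X x.
Definition compact_set (n : nat) (X : vec -> Prop) : Prop :=
  bounded_set n X /\ closed_set n X.

(* ---------- Agent-local problem (P1) ----------
   minimize c^T z + M v over z in conv(X), v >= 0, s.t. A z <= y + v 1,
   with S coupling rows A s; mu is the multiplier of A z <= y + v 1. *)
Definition p1_feas (n S : nat) (A : nat -> vec) (X : vec -> Prop) (y : vec)
  (z : vec) (v : R) : Prop :=
  in_conv n X z /\ 0 <= v /\ forall s, (s < S)%nat -> dot n (A s) z <= y s + v.

Definition p1_cost (n : nat) (c : vec) (M : R) (z : vec) (v : R) : R :=
  dot n c z + M * v.

Definition p1_primal_opt n S c A X y M z v : Prop :=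
  p1_feas n S A X y z v /\
  forall z' v', p1_feas n S A X y z' v' -> p1_cost n c M z v <= p1_cost n c M z' v'.

Definition p1_lagr (n S : nat) (c : vec) (A : nat -> vec) (y : vec) (M : R)
  (z : vec) (v : R) (mu : vec) : R :=
  p1_cost n c M z v + rsum S (fun s => mu s * (dot n (A s) z - y s - v)).

(* a is a lower bound of the dual function q(mu) = inf_{z in conv X, v >= 0} L *)
Definition p1_dual_ge n S c A X y M (mu : vec) (a : R) : Prop :=
  forall z v, in_conv n X z -> 0 <= v -> a <= p1_lagr n S c A y M z v mu.

(* mu >= 0 maximizes the dual function q over mu >= 0 (q valued in extended reals) *)
Definition p1_dual_opt n S c A X y M (mu : vec) : Prop :=
  (forall s, (s < S)%nat -> 0 <= mu s) /\
  forall mu', (forall s, (s < S)%nat -> 0 <= mu' s) ->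
    forall a, p1_dual_ge n S c A X y M mu' a -> p1_dual_ge n S c A X y M mu a.

Definition p1_pd_opt n S c A X y M z v mu : Prop :=
  p1_primal_opt n S c A X y M z v /\ p1_dual_opt n S c A X y M mu.

Definition p3_rho_feas (n S : nat) (A : nat -> vec) (X : vec -> Prop) (y : vec) (rho : R) : Prop :=
  0 <= rho /\ exists x, X x /\ forall s, (s < S)%nat -> dot n (A s) x <= y s + rho.

Definition p3_lex_opt (n S : nat) (c : vec) (A : nat -> vec) (X : vec -> Prop) (y : vec) (x : vec) : Prop :=
  exists rho, is_min_value (p3_rho_feas n S A X y) (fun r => r) rho /\
    X x /\ (forall s, (s < S)%nat -> dot n (A s) x <= y s + rho) /\
    forall x', X x' -> (forall s, (s < S)%nat -> dot n (A s) x' <= y s + rho) ->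
      dot n c x <= dot n c x'.

Definition graph_edge (N : nat) (adj : nat -> nat -> bool) (i j : nat) : Prop :=
  (i < N)%nat /\ (j < N)%nat /\ adj i j = true.
Definition connected_undirected (N : nat) (adj : nat -> nat -> bool) : Prop :=
  (forall i j, adj i j = adj j i) /\ (forall i, adj i i = false) /\
  forall i j, (i < N)%nat -> (j < N)%nat -> clos_refl_trans nat (graph_edge N adj) i j.

(* Main.v *)
Require Import Defs.
From Stdlib Require Import Reals Lra Lia ZArith Relations List Classical ClassicalEpsilon.
Open Scope R_scope.


Lemma rsum_ext n f g : (forall i, (i < n)%nat -> f i = g i) -> rsum n f = rsum n g.
Proof. induction n; simpl; intros H; auto. rewrite IHn by (intros; apply H; lia). rewrite H by lia. auto. Qed.

Lemma rsum_le n f g : (forall i, (i < n)%nat -> f i <= g i) -> rsum n f <= rsum n g.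
Proof. induction n; simpl; intros H; [lra|]. assert (H1:= H n ltac:(lia)). assert (rsum n f <= rsum n g) by (apply IHn; intros; apply H; lia). lra. Qed.

Lemma rsum_plus n f g : rsum n (fun i => f i + g i) = rsum n f + rsum n g.
Proof. induction n; simpl; [lra|]. rewrite IHn. lra. Qed.

Lemma rsum_minus n f g : rsum n (fun i => f i - g i) = rsum n f - rsum n g.
Proof. induction n; simpl; [lra|]. rewrite IHn. lra. Qed.

Lemma rsum_scal n c f : rsum n (fun i => c * f i) = c * rsum n f.
Proof. induction n; simpl; [lra|]. rewrite IHn. lra. Qed.

Lemma rsum_const n c : rsum n (fun _ => c) = INR n * c.
Proof. induction n; simpl rsum; [simpl; lra|]. rewrite IHn. rewrite S_INR. lra. Qed.

Lemma rsum_swap n m f : rsum n (fun i => rsum m (fun j => f i j)) = rsum m (fun j => rsum n (fun i => f i j)).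
Proof. induction n; simpl.
- rewrite (rsum_const m 0). lra.
- rewrite IHn. rewrite <- rsum_plus. reflexivity. Qed.

Lemma rsum_app m1 m2 f : rsum (m1 + m2) f = rsum m1 f + rsum m2 (fun j => f (m1 + j)%nat).
Proof. induction m2; simpl. rewrite Nat.add_0_r. lra. rewrite Nat.add_succ_r. simpl. rewrite IHm2. lra. Qed.

Lemma rsum_ind n f k : (k < n)%nat -> rsum n (fun i => if Nat.eqb i k then f i else 0) = f k.
Proof. induction n; intros H; [lia|]. simpl. destruct (Nat.eqb n k) eqn:E.
- apply Nat.eqb_eq in E; subst. rewrite (rsum_ext k _ (fun _ => 0)). rewrite rsum_const. lra.
  intros i Hi. destruct (Nat.eqb_spec i k); [lia|auto].
- apply Nat.eqb_neq in E. rewrite IHn by lia. lra. Qed.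

Lemma rsum_nonneg n f : (forall i, (i < n)%nat -> 0 <= f i) -> 0 <= rsum n f.
Proof. intros H. rewrite <- (Rmult_0_r (INR n)). rewrite <- rsum_const. apply rsum_le. auto. Qed.

Lemma rsum_term_le n f k : (forall i, (i < n)%nat -> 0 <= f i) -> (k < n)%nat -> f k <= rsum n f.
Proof. induction n; intros H Hk; [lia|]. simpl. destruct (Nat.eq_dec k n).
- subst. assert (0 <= rsum n f) by (apply rsum_nonneg; intros; apply H; lia). lra.
- assert (f k <= rsum n f) by (apply IHn; [intros; apply H; lia| lia]). assert (0 <= f n) by (apply H; lia). lra. Qed.

Lemma rsum_le_const n f c : (forall i, (i < n)%nat -> f i <= c) -> rsum n f <= INR n * c.
Proof. intros H. rewrite <- rsum_const. apply rsum_le. auto. Qed.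

Lemma rsum_abs n f : Rabs (rsum n f) <= rsum n (fun i => Rabs (f i)).
Proof. induction n; simpl. rewrite Rabs_R0; lra. eapply Rle_trans. apply Rabs_triang. lra. Qed.

Lemma dot_ext n u x y : (forall k, (k < n)%nat -> x k = y k) -> dot n u x = dot n u y.
Proof. intros H. unfold dot. apply rsum_ext. intros. rewrite H; auto. Qed.

Lemma dot_lin n u a x b y : dot n u (fun k => a * x k + b * y k) = a * dot n u x + b * dot n u y.
Proof. unfold dot. rewrite <- !rsum_scal, <- rsum_plus. apply rsum_ext. intros; ring. Qed.

Lemma conv_of_X n (X : vec -> Prop) x : X x -> in_conv n X x.
Proof. intros H. exists 1%nat, (fun _ => 1), (fun _ => x). split; [|split].
- intros j Hj. split; [lra|auto].
- simpl; lra.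
- intros k Hk. simpl. lra. Qed.

Lemma conv_comb n (X : vec -> Prop) z1 z2 th : 0 <= th <= 1 -> in_conv n X z1 -> in_conv n X z2 ->
  in_conv n X (fun k => th * z1 k + (1 - th) * z2 k).
Proof. intros Hth [m1 [w1 [p1 [H1 [S1 E1]]]]] [m2 [w2 [p2 [H2 [S2 E2]]]]].
exists (m1 + m2)%nat, (fun j => if Nat.ltb j m1 then th * w1 j else (1 - th) * w2 (j - m1)%nat),
  (fun j => if Nat.ltb j m1 then p1 j else p2 (j - m1)%nat). split; [|split].
- intros j Hj. destruct (Nat.ltb_spec j m1).
  + destruct (H1 j H) as [A B]. split; auto. apply Rmult_le_pos; lra.
  + destruct (H2 (j - m1)%nat ltac:(lia)) as [A B]. split; auto. apply Rmult_le_pos; lra.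
- rewrite rsum_app. rewrite (rsum_ext m1 _ (fun j => th * w1 j)).
  rewrite (rsum_ext m2 _ (fun j => (1 - th) * w2 j)). rewrite !rsum_scal. rewrite S1, S2. lra.
  + intros i Hi. destruct (Nat.ltb_spec (m1 + i) m1); [lia|]. f_equal. f_equal. lia.
  + intros i Hi. destruct (Nat.ltb_spec i m1); [|lia]. auto.
- intros k Hk. rewrite rsum_app. rewrite E1, E2 by auto.
  rewrite <- !rsum_scal. f_equal; apply rsum_ext.
  + intros i Hi. destruct (Nat.ltb_spec i m1); [|lia]. ring.
  + intros i Hi. destruct (Nat.ltb_spec (m1 + i) m1); [lia|]. replace (m1 + i - m1)%nat with i by lia. ring.
Qed.

Lemma dot_conv n (X : vec -> Prop) u z : in_conv n X z ->
  exists m w p, (forall j, (j < m)%nat -> 0 <= w j /\ X (p j)) /\ rsum m w = 1 /\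
   dot n u z = rsum m (fun j => w j * dot n u (p j)).
Proof. intros [m [w [p [H1 [S1 E1]]]]]. exists m, w, p. split; [auto|split; auto].
unfold dot. rewrite (rsum_ext n _ (fun k => rsum m (fun j => u k * (w j * p j k)))).
rewrite rsum_swap. apply rsum_ext. intros j Hj. rewrite <- rsum_scal. apply rsum_ext. intros; ring.
intros k Hk. rewrite E1 by auto. rewrite <- rsum_scal. auto. Qed.

Lemma dot_conv_le n (X : vec -> Prop) u z B : in_conv n X z -> (forall x, X x -> dot n u x <= B) -> dot n u z <= B.
Proof. intros Hz HB. destruct (dot_conv n X u z Hz) as [m [w [p [H1 [S1 E]]]]]. rewrite E.
replace B with (rsum m (fun j => w j * B)). apply rsum_le. intros j Hj. destruct (H1 j Hj). apply Rmult_le_compat_l; auto.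
rewrite (rsum_ext m _ (fun j => B * w j)) by (intros; ring). rewrite rsum_scal, S1. ring. Qed.

Lemma dot_conv_ge n (X : vec -> Prop) u z B : in_conv n X z -> (forall x, X x -> B <= dot n u x) -> B <= dot n u z.
Proof. intros Hz HB. destruct (dot_conv n X u z Hz) as [m [w [p [H1 [S1 E]]]]]. rewrite E.
replace B with (rsum m (fun j => w j * B)). apply rsum_le. intros j Hj. destruct (H1 j Hj). apply Rmult_le_compat_l; auto.
rewrite (rsum_ext m _ (fun j => B * w j)) by (intros; ring). rewrite rsum_scal, S1. ring. Qed.


Definition upd (u : vec) (k : nat) (e : R) : vec := fun s => u s + (if Nat.eqb s k then e else 0).

Lemma alg1 lam mu A1 A2 : mu < 0 -> 0 < lam ->
  0 <= (- mu / (lam - mu)) * A1 + (1 - (- mu / (lam - mu))) * A2 -> A2 / mu <= A1 / lam.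
Proof. intros Hm Hl H.
assert (E : (- mu / (lam - mu)) * A1 + (1 - (- mu / (lam - mu))) * A2 = (- mu * A1 + lam * A2) / (lam - mu)) by (field; lra).
rewrite E in H. assert (H2 : 0 <= - mu * A1 + lam * A2).
{ apply Rmult_le_reg_r with (/ (lam - mu)). apply Rinv_0_lt_compat; lra. rewrite Rmult_0_l. exact H. }
assert (E2 : A1 / lam - A2 / mu = (- mu * A1 + lam * A2) / (lam * (- mu))) by (field; lra).
assert (0 <= (- mu * A1 + lam * A2) / (lam * (- mu))).
{ apply Rmult_le_pos; auto. left. apply Rinv_0_lt_compat. nra. }
lra. Qed.

Lemma hb (S : nat) (P : vec -> R -> Prop) (u0 : vec) (f0 : R) :
 (forall u1 u2 a1 a2 th, 0 <= th <= 1 -> P u1 a1 -> P u2 a2 ->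
     P (fun s => th * u1 s + (1 - th) * u2 s) (th * a1 + (1 - th) * a2)) ->
 (forall u u' a, (forall s, (s < S)%nat -> u s = u' s) -> P u a -> P u' a) ->
 (forall a, P u0 a -> f0 <= a) ->
 (forall k, (k < S)%nat -> exists e, 0 < e /\ (exists a, P (upd u0 k e) a) /\ (exists a, P (upd u0 k (- e)) a)) ->
 exists g : vec, forall d a, P (fun s => u0 s + d s) a -> f0 + rsum S (fun s => g s * d s) <= a.
Proof.
intros Pconv Pext Pf0 Pint.
assert (Pext' : forall u u' a, (forall s, u s = u' s) -> P u a -> P u' a) by (intros; eapply Pext; eauto).
assert (Main : forall k, (k <= S)%nat -> exists g : vec, forall d a, (forall s, (k <= s)%nat -> d s = 0) ->
   P (fun s => u0 s + d s) a -> f0 + rsum k (fun s => g s * d s) <= a).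
{ induction k as [|k IH]; intros Hk.
  - exists (fun _ => 0). intros d a Hd HP. simpl. rewrite Rplus_0_r. apply Pf0.
    eapply Pext'; [|exact HP]. intros s. simpl. rewrite Hd by lia. lra.
  - destruct (IH ltac:(lia)) as [g Hg].
    set (Lo := fun x => exists d a mu, (forall s, (k <= s)%nat -> d s = 0) /\ mu < 0 /\
         P (fun s => u0 s + d s + (if Nat.eqb s k then mu else 0)) a /\
         x = (a - f0 - rsum k (fun s => g s * d s)) / mu).
    set (Up := fun x => exists d a mu, (forall s, (k <= s)%nat -> d s = 0) /\ 0 < mu /\
         P (fun s => u0 s + d s + (if Nat.eqb s k then mu else 0)) a /\
         x = (a - f0 - rsum k (fun s => g s * d s)) / mu).
    assert (Key : forall x y, Lo x -> Up y -> x <= y).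
    { intros x y [d2 [a2 [mu [Hd2 [Hmu [HP2 Ex]]]]]] [d1 [a1 [lam [Hd1 [Hlam [HP1 Ey]]]]]].
      subst x y. set (th := - mu / (lam - mu)).
      assert (Hth : 0 <= th <= 1).
      { unfold th. split. apply Rmult_le_pos. lra. left; apply Rinv_0_lt_compat; lra.
        apply Rmult_le_reg_r with (lam - mu). lra. unfold Rdiv. rewrite Rmult_assoc, Rinv_l by lra. lra. }
      assert (HC := Pconv _ _ _ _ th Hth HP1 HP2).
      set (dc := fun s => th * d1 s + (1 - th) * d2 s).
      assert (HPc : P (fun s => u0 s + dc s) (th * a1 + (1 - th) * a2)).
      { eapply Pext'; [|exact HC]. intros s. unfold dc. destruct (Nat.eqb s k).
        - assert (th * lam + (1 - th) * mu = 0) by (unfold th; field; lra). nra.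
        - ring. }
      assert (Hdc : forall s, (k <= s)%nat -> dc s = 0).
      { intros s Hs. unfold dc. rewrite Hd1, Hd2 by auto. ring. }
      assert (H := Hg _ _ Hdc HPc).
      assert (E : rsum k (fun s => g s * dc s) = th * rsum k (fun s => g s * d1 s) + (1 - th) * rsum k (fun s => g s * d2 s)).
      { rewrite <- !rsum_scal, <- rsum_plus. apply rsum_ext. intros. unfold dc. ring. }
      rewrite E in H. apply alg1; auto. fold th. lra. }
    destruct (Pint k ltac:(lia)) as [e [He [[ap HPp] [am HPm]]]].
    assert (HLo : Lo ((am - f0 - rsum k (fun s => g s * 0)) / (- e))).
    { exists (fun _ => 0), am, (- e). split; [auto|split; [lra|split; auto]].
      eapply Pext'; [|exact HPm]. intros s. unfold upd. lra. }
    assert (HUp : Up ((ap - f0 - rsum k (fun s => g s * 0)) / e)).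
    { exists (fun _ => 0), ap, e. split; [auto|split; [lra|split; auto]].
      eapply Pext'; [|exact HPp]. intros s. unfold upd. lra. }
    destruct (completeness Lo) as [gam [Hub Hlub]].
    { exists ((ap - f0 - rsum k (fun s => g s * 0)) / e). intros x Hx. apply Key; auto. }
    { eexists; exact HLo. }
    exists (fun s => if Nat.eqb s k then gam else g s).
    intros d a Hd HP. simpl. rewrite Nat.eqb_refl.
    set (d' := fun s => if Nat.eqb s k then 0 else d s).
    assert (E1 : rsum k (fun s => (if Nat.eqb s k then gam else g s) * d s) = rsum k (fun s => g s * d' s)).
    { apply rsum_ext. intros s Hs. unfold d'. destruct (Nat.eqb_spec s k); [lia|auto]. }
    rewrite E1.
    assert (Hd' : forall s, (k <= s)%nat -> d' s = 0).
    { intros s Hs. unfold d'. destruct (Nat.eqb_spec s k); auto. apply Hd. lia. }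
    assert (HP' : P (fun s => u0 s + d' s + (if Nat.eqb s k then d k else 0)) a).
    { eapply Pext'; [|exact HP]. intros s. unfold d'. destruct (Nat.eqb_spec s k); subst; lra. }
    destruct (Rtotal_order (d k) 0) as [Hl|[Hz|Hp]].
    + assert (Lo ((a - f0 - rsum k (fun s => g s * d' s)) / d k)) by (exists d', a, (d k); auto).
      assert (X := Hub _ H).
      assert (X2 : (a - f0 - rsum k (fun s => g s * d' s)) / d k * d k >= gam * d k) by nra.
      unfold Rdiv in X2. rewrite Rmult_assoc, Rinv_l in X2 by lra. lra.
    + rewrite Hz. assert (f0 + rsum k (fun s => g s * d' s) <= a).
      { apply Hg; auto. eapply Pext'; [|exact HP]. intros s. unfold d'. destruct (Nat.eqb_spec s k); subst; lra. }
      lra.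
    + assert (Up ((a - f0 - rsum k (fun s => g s * d' s)) / d k)) by (exists d', a, (d k); auto).
      assert (X : gam <= (a - f0 - rsum k (fun s => g s * d' s)) / d k).
      { apply Hlub. intros x Hx. apply Key; auto. }
      assert (X2 : gam * d k <= (a - f0 - rsum k (fun s => g s * d' s)) / d k * d k) by nra.
      unfold Rdiv in X2. rewrite Rmult_assoc, Rinv_l in X2 by lra. lra. }
destruct (Main S (le_n S)) as [g Hg]. exists g. intros d a HP.
set (d' := fun s => if Nat.ltb s S then d s else 0).
assert (E : rsum S (fun s => g s * d s) = rsum S (fun s => g s * d' s)).
{ apply rsum_ext. intros s Hs. unfold d'. destruct (Nat.ltb_spec s S); [auto|lia]. }
rewrite E. apply Hg.
- intros s Hs. unfold d'. destruct (Nat.ltb_spec s S); [lia|auto].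
- eapply Pext; [|exact HP]. intros s Hs. unfold d'. destruct (Nat.ltb_spec s S); [auto|lia].
Qed.


Lemma small_inv eps : 0 < eps -> exists K : nat, / (INR K + 1) < eps.
Proof. intros H. destruct (archimed_cor1 eps H) as [N [H1 H2]]. exists N.
eapply Rle_lt_trans; [|exact H1]. apply Rinv_le_contravar. apply lt_0_INR; lia. lra. Qed.

Lemma bw1 (u : nat -> R) B : (forall n, Rabs (u n) <= B) ->
  exists l (psi : nat -> nat), (forall k, (k <= psi k)%nat) /\
   forall eps, 0 < eps -> exists K, forall k, (K <= k)%nat -> Rabs (u (psi k) - l) < eps.
Proof. intros HB.
assert (Hin : forall n, (fun c => -B <= c <= B) (u n)).
{ intros n. specialize (HB n). simpl. unfold Rabs in HB. destruct (Rcase_abs (u n)); lra. }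
destruct (Bolzano_Weierstrass u (fun c => -B <= c <= B) (compact_P3 (-B) B) Hin) as [l Hl].
assert (Hpos : forall k, 0 < / (INR k + 1)).
{ intros k. apply Rinv_0_lt_compat. pose proof (pos_INR k). lra. }
assert (Ex : forall k, exists p, (k <= p)%nat /\ Rabs (u p - l) < / (INR k + 1)).
{ intros k. assert (Nb : neighbourhood (disc l (mkposreal _ (Hpos k))) l).
  { exists (mkposreal _ (Hpos k)). intros y Hy. exact Hy. }
  destruct (Hl _ k Nb) as [p [Hp Hv]]. exists p. split; [exact Hp|exact Hv]. }
exists l, (fun k => proj1_sig (constructive_indefinite_description _ (Ex k))). split.
- intros k. destruct (constructive_indefinite_description _ (Ex k)) as [p [H1 H2]]. simpl. auto.
- intros eps He. destruct (small_inv eps He) as [K HK]. exists K. intros k Hk.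
  destruct (constructive_indefinite_description _ (Ex k)) as [p [H1 H2]]. simpl.
  eapply Rlt_le_trans. exact H2. eapply Rle_trans; [|left; exact HK].
  apply Rinv_le_contravar. pose proof (pos_INR K). lra. apply le_INR in Hk. lra. Qed.

Lemma bwL {I : Type} (dec : forall x y : I, {x = y} + {x <> y}) (L : list I) (u : nat -> I -> R) (Bd : I -> R) :
  (forall n x, In x L -> Rabs (u n x) <= Bd x) ->
  exists (phi : nat -> nat) (l : I -> R), (forall k, (k <= phi k)%nat) /\
   forall x, In x L -> forall eps, 0 < eps -> exists K, forall k, (K <= k)%nat -> Rabs (u (phi k) x - l x) < eps.
Proof. induction L as [|x0 L IH]; intros HB.
- exists (fun k => k), (fun _ => 0). split; auto. intros x [].
- destruct IH as [phi [l [Hphi Hc]]]. { intros n x Hx. apply HB. right; auto. }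
  destruct (bw1 (fun k => u (phi k) x0) (Bd x0)) as [l0 [psi [Hpsi Hc0]]].
  { intros n. apply HB. left; auto. }
  exists (fun k => phi (psi k)), (fun y => if dec y x0 then l0 else l y). split.
  + intros k. specialize (Hphi (psi k)). specialize (Hpsi k). lia.
  + intros x Hx eps He. destruct (dec x x0) as [->|Hne].
    * destruct (Hc0 eps He) as [K HK]. exists K. intros k Hk. apply HK; auto.
    * destruct Hx as [Hx|Hx]; [congruence|]. destruct (Hc x Hx eps He) as [K HK].
      exists K. intros k Hk. apply HK. specialize (Hpsi k). lia. Qed.

Lemma unifL {I : Type} (L : list I) (f : nat -> I -> R) (l : I -> R) :
  (forall x, In x L -> forall eps, 0 < eps -> exists K, forall k, (K <= k)%nat -> Rabs (f k x - l x) < eps) ->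
  forall eps, 0 < eps -> exists K, forall k, (K <= k)%nat -> forall x, In x L -> Rabs (f k x - l x) < eps.
Proof. induction L as [|x0 L IH]; intros H eps He.
- exists O. intros k _ x [].
- destruct (H x0 (or_introl eq_refl) eps He) as [K0 HK0].
  destruct (IH (fun x Hx => H x (or_intror Hx)) eps He) as [K1 HK1].
  exists (Nat.max K0 K1). intros k Hk x [<-|Hx].
  + apply HK0. lia.
  + apply HK1; auto. lia. Qed.

Lemma fejer_partial (D e al : nat -> R) C :
  (forall t, D (S t) <= D t - al t * e t + al t ^ 2 * C) ->
  forall t k, D (t + k)%nat <= D t - rsum k (fun j => al (t + j)%nat * e (t + j)%nat) + C * rsum k (fun j => al (t + j)%nat ^ 2).
Proof. intros H t k. induction k; cbn [rsum].
- rewrite Nat.add_0_r. lra.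
- rewrite Nat.add_succ_r. specialize (H (t + k)%nat). lra. Qed.

Lemma psum_growing (al : nat -> R) : Un_growing (fun T => rsum T (fun t => al t ^ 2)).
Proof. intros n. simpl. pose proof (pow2_ge_0 (al n)). lra. Qed.

Lemma psum_le (al : nat -> R) l : Un_cv (fun T => rsum T (fun t => al t ^ 2)) l -> forall n, rsum n (fun t => al t ^ 2) <= l.
Proof. intros H n. apply (growing_ineq _ l (psum_growing al) H). Qed.

Lemma psum_nonneg (al : nat -> R) n : 0 <= rsum n (fun t => al t ^ 2).
Proof. apply rsum_nonneg. intros. apply pow2_ge_0. Qed.

Lemma liminf_e (D e al : nat -> R) C l :
  (forall t, 0 <= D t) -> (forall t, 0 <= e t) -> (forall t, 0 <= al t) -> 0 <= C ->
  (forall t, D (S t) <= D t - al t * e t + al t ^ 2 * C) ->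
  cv_infty (fun T => rsum T al) -> Un_cv (fun T => rsum T (fun t => al t ^ 2)) l ->
  forall eps, 0 < eps -> forall T0, exists t, (T0 <= t)%nat /\ e t < eps.
Proof. intros HD He Hal HC H Hinf Hl eps Heps T0.
apply NNPP. intros Hno.
assert (Hge : forall t, (T0 <= t)%nat -> eps <= e t).
{ intros t Ht. destruct (Rle_or_lt eps (e t)); auto. exfalso. apply Hno. exists t; auto. }
destruct (Hinf (rsum T0 al + (D T0 + C * l) / eps + 1)) as [N HN].
set (k := (Nat.max N T0 - T0)%nat).
assert (Hk : (T0 + k)%nat = Nat.max N T0) by (unfold k; lia).
specialize (HN (T0 + k)%nat ltac:(lia)).
assert (F := fejer_partial D e al C H T0 k).
assert (E1 : rsum (T0 + k) al = rsum T0 al + rsum k (fun j => al (T0 + j)%nat)) by apply rsum_app.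
assert (E2 : rsum (T0 + k) (fun t => al t ^ 2) = rsum T0 (fun t => al t ^ 2) + rsum k (fun j => al (T0 + j)%nat ^ 2)) by apply rsum_app.
assert (B2 : rsum k (fun j => al (T0 + j)%nat ^ 2) <= l).
{ pose proof (psum_le al l Hl (T0 + k)%nat). pose proof (psum_nonneg al T0). lra. }
assert (B1 : eps * rsum k (fun j => al (T0 + j)%nat) <= rsum k (fun j => al (T0 + j)%nat * e (T0 + j)%nat)).
{ rewrite <- rsum_scal. apply rsum_le. intros j Hj. specialize (Hge (T0 + j)%nat ltac:(lia)). specialize (Hal (T0 + j)%nat). nra. }
specialize (HD (T0 + k)%nat).
assert (eps * rsum k (fun j => al (T0 + j)%nat) <= D T0 + C * l) by nra.
assert (rsum k (fun j => al (T0 + j)%nat) <= (D T0 + C * l) / eps).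
{ assert (X : rsum k (fun j => al (T0 + j)%nat) = (eps * rsum k (fun j => al (T0 + j)%nat)) / eps) by (field; lra).
  rewrite X. unfold Rdiv. apply Rmult_le_compat_r. left; apply Rinv_0_lt_compat; lra. lra. }
lra. Qed.

Lemma tail_small (al : nat -> R) l : Un_cv (fun T => rsum T (fun t => al t ^ 2)) l ->
  forall eps, 0 < eps -> exists T, forall t k, (T <= t)%nat -> rsum k (fun j => al (t + j)%nat ^ 2) < eps.
Proof. intros H eps He. destruct (H (eps / 2) ltac:(lra)) as [N HN]. exists N. intros t k Ht.
pose proof (HN t Ht) as A. pose proof (HN (t + k)%nat ltac:(lia)) as B. unfold R_dist in A, B.
rewrite rsum_app in B. apply Rabs_def2 in A. apply Rabs_def2 in B. lra. Qed.


Definition Bop (N : nat) (adj : nat -> nat -> bool) (lam : nat -> nat -> vec) : nat -> vec :=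
  fun i s => rsum N (fun j => if adj i j then lam i j s - lam j i s else 0).

Definition ind (k i : nat) : R := if Nat.eqb k i then 1 else 0.

Lemma Bop_plus N adj l1 l2 i s : Bop N adj (fun a b t => l1 a b t + l2 a b t) i s = Bop N adj l1 i s + Bop N adj l2 i s.
Proof. unfold Bop. rewrite <- rsum_plus. apply rsum_ext. intros j _. destruct (adj i j); ring. Qed.

Lemma Bop_minus N adj l1 l2 i s : Bop N adj (fun a b t => l1 a b t - l2 a b t) i s = Bop N adj l1 i s - Bop N adj l2 i s.
Proof. unfold Bop. rewrite <- rsum_minus. apply rsum_ext. intros j _. destruct (adj i j); ring. Qed.

Lemma rsum_ind' n (f : nat -> R) k : (k < n)%nat -> rsum n (fun i => f i * ind i k) = f k.
Proof. intros H. rewrite <- (rsum_ind n f k H). apply rsum_ext. intros i _. unfold ind. destruct (Nat.eqb i k); ring. Qed.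

Ltac crush := repeat (match goal with |- context [Nat.eqb ?a ?b] => destruct (Nat.eqb_spec a b) end);
  subst; simpl; try congruence; repeat (match goal with |- context [if ?c then _ else _] => destruct c eqn:? end); try ring; try congruence.

Lemma edge_rep N adj i j (u : vec) : (forall a b, adj a b = adj b a) -> (forall a, adj a a = false) ->
  (i < N)%nat -> (j < N)%nat -> adj i j = true ->
  exists lam, forall k s, (k < N)%nat -> Bop N adj lam k s = u s * (ind k i - ind k j).
Proof. intros Hsym Hirr Hi Hj Hij.
assert (Hne : i <> j) by (intros ->; rewrite Hirr in Hij; discriminate).
exists (fun a b s => if andb (Nat.eqb a i) (Nat.eqb b j) then u s else 0).
intros k s Hk. unfold Bop, ind.
assert (Hji : adj j i = true) by (rewrite Hsym; auto).
destruct (Nat.eqb_spec k i) as [->|Hki].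
- destruct (Nat.eqb_spec i j) as [|_]; [congruence|].
  transitivity (rsum N (fun l => if Nat.eqb l j then u s else 0)); [|rewrite (rsum_ind N (fun _ => u s) j Hj); ring].
  apply rsum_ext. intros l Hl. crush.
- destruct (Nat.eqb_spec k j) as [->|Hkj].
  + transitivity (rsum N (fun l => if Nat.eqb l i then - u s else 0)); [|rewrite (rsum_ind N (fun _ => - u s) i Hi); ring].
    apply rsum_ext. intros l Hl. crush.
  + transitivity (rsum N (fun _ => 0)); [|rewrite rsum_const; ring]. apply rsum_ext. intros l Hl. crush.
Qed.

Lemma path_rep N adj i j : (forall a b, adj a b = adj b a) -> (forall a, adj a a = false) ->
  clos_refl_trans nat (graph_edge N adj) i j -> forall u : vec,
  exists lam, forall k s, (k < N)%nat -> Bop N adj lam k s = u s * (ind k i - ind k j).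
Proof. intros Hsym Hirr H. induction H as [x y [Hx [Hy Hxy]]| x | x y z H1 IH1 H2 IH2]; intros u.
- apply edge_rep; auto.
- exists (fun _ _ _ => 0). intros k s Hk. unfold Bop. transitivity (rsum N (fun _ => 0)); [|rewrite rsum_const; ring]. apply rsum_ext. intros l _; destruct (adj k l); ring.
- destruct (IH1 u) as [l1 E1]. destruct (IH2 u) as [l2 E2].
  exists (fun a b t => l1 a b t + l2 a b t). intros k s Hk. rewrite Bop_plus, E1, E2 by auto. ring.
Qed.

Lemma zero_sum_rep N S adj (w : nat -> vec) : (0 < N)%nat -> connected_undirected N adj ->
  (forall s, (s < S)%nat -> rsum N (fun i => w i s) = 0) ->
  exists lam, forall k s, (k < N)%nat -> (s < S)%nat -> Bop N adj lam k s = w k s.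
Proof. intros HN [Hsym [Hirr Hc]] Hw.
assert (Ind : forall n, (n <= N)%nat -> exists lam, forall k s, (k < N)%nat ->
   Bop N adj lam k s = rsum n (fun i => w i s * (ind k i - ind k 0))).
{ induction n; intros Hn.
  - exists (fun _ _ _ => 0). intros k s Hk. unfold Bop. simpl. transitivity (rsum N (fun _ => 0)); [|rewrite rsum_const; ring].
    apply rsum_ext. intros; destruct (adj k i); ring.
  - destruct (IHn ltac:(lia)) as [l1 E1]. destruct (path_rep N adj n 0 Hsym Hirr (Hc n 0%nat ltac:(lia) HN) (fun s => w n s)) as [l2 E2].
    exists (fun a b t => l1 a b t + l2 a b t). intros k s Hk. rewrite Bop_plus, E1, E2 by auto. simpl. ring. }
destruct (Ind N (le_n N)) as [lam E]. exists lam. intros k s Hk Hs. rewrite E by auto.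
rewrite (rsum_ext N _ (fun i => w i s * ind i k - ind k 0 * w i s)).
rewrite rsum_minus, rsum_scal, Hw by auto. rewrite rsum_ind' by auto. ring.
intros i Hi. unfold ind. destruct (Nat.eqb_spec k i); destruct (Nat.eqb_spec i k); try lia; ring.
Qed.


Lemma rsum_ind_mul S (g : vec) k : (k < S)%nat -> rsum S (fun s => g s * (if Nat.eqb s k then 1 else 0)) = g k.
Proof. intros H. rewrite <- (rsum_ind S g k H). apply rsum_ext. intros i _. destruct (Nat.eqb i k); ring. Qed.

Lemma p1_strong n S c A (X : vec -> Prop) M y z v mu :
  p1_pd_opt n S c A X y M z v mu -> p1_dual_ge n S c A X y M mu (p1_cost n c M z v).
Proof. intros [[Hf Hopt] [Hmu Hdual]].
set (P := fun u a => exists z' v', p1_feas n S A X u z' v' /\ a = p1_cost n c M z' v').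
destruct (hb S P y (p1_cost n c M z v)) as [g Hg].
- intros u1 u2 a1 a2 th Hth [z1 [v1 [[C1 [V1 F1]] E1]]] [z2 [v2 [[C2 [V2 F2]] E2]]].
  exists (fun k => th * z1 k + (1 - th) * z2 k), (th * v1 + (1 - th) * v2). split; [split; [|split]|].
  + apply conv_comb; auto.
  + nra.
  + intros s Hs. rewrite dot_lin. specialize (F1 s Hs). specialize (F2 s Hs). nra.
  + subst. unfold p1_cost. rewrite dot_lin. ring.
- intros u u' a Hu [z' [v' [[C1 [V1 F1]] E1]]]. exists z', v'. split; auto. split; [auto|split; auto].
  intros s Hs. rewrite <- Hu; auto.
- intros a [z' [v' [Hf' ->]]]. apply Hopt; auto.
- intros k Hk. exists 1. split; [lra|]. destruct Hf as [C1 [V1 F1]]. split.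
  + exists (p1_cost n c M z (v + 1)). exists z, (v + 1). split; auto. split; [auto|split; [lra|]].
    intros s Hs. specialize (F1 s Hs). unfold upd. destruct (Nat.eqb s k); lra.
  + exists (p1_cost n c M z (v + 1)). exists z, (v + 1). split; auto. split; [auto|split; [lra|]].
    intros s Hs. specialize (F1 s Hs). unfold upd. destruct (Nat.eqb s k); lra.
- assert (Hpi : forall s, (s < S)%nat -> 0 <= - g s).
  { intros s Hs. destruct Hf as [C1 [V1 F1]].
    assert (H := Hg (fun s' => if Nat.eqb s' s then 1 else 0) (p1_cost n c M z v)).
    cbv beta in H. rewrite rsum_ind_mul in H by auto.
    enough (p1_cost n c M z v + g s <= p1_cost n c M z v) by lra. apply H.
    exists z, v. split; auto. split; [auto|split; auto]. intros s' Hs'. specialize (F1 s' Hs').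
    destruct (Nat.eqb s' s); lra. }
  apply Hdual with (fun s => - g s); auto.
  intros z' v' Hz' Hv'. unfold p1_lagr.
  assert (H := Hg (fun s => dot n (A s) z' - v' - y s) (p1_cost n c M z' v')).
  assert (E : rsum S (fun s => - g s * (dot n (A s) z' - y s - v')) = - rsum S (fun s => g s * (dot n (A s) z' - v' - y s))).
  { rewrite <- (Rmult_1_l (rsum S (fun s => g s * _))). rewrite Ropp_mult_distr_l. rewrite <- rsum_scal.
    apply rsum_ext. intros; ring. }
  rewrite E. enough (p1_cost n c M z v + rsum S (fun s => g s * (dot n (A s) z' - v' - y s)) <= p1_cost n c M z' v') by lra.
  apply H. exists z', v'. split; auto. split; [auto|split; auto]. intros s Hs. lra.
Qed.

Lemma p1_mu_bound n S c A (X : vec -> Prop) y M mu a z0 :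
  p1_dual_ge n S c A X y M mu a -> in_conv n X z0 -> rsum S mu <= M.
Proof. intros H Hz. destruct (Rle_or_lt (rsum S mu) M) as [|Hlt]; auto. exfalso.
set (K0 := dot n c z0 + rsum S (fun s => mu s * (dot n (A s) z0 - y s))).
set (V := (Rabs (K0 - a) + 1) / (rsum S mu - M)).
assert (HV : 0 < V). { unfold V. apply Rdiv_lt_0_compat. pose proof (Rabs_pos (K0 - a)). lra. lra. }
specialize (H z0 V Hz ltac:(lra)). unfold p1_lagr, p1_cost in H.
assert (E : rsum S (fun s => mu s * (dot n (A s) z0 - y s - V)) = rsum S (fun s => mu s * (dot n (A s) z0 - y s)) - V * rsum S mu).
{ rewrite <- rsum_scal, <- rsum_minus. apply rsum_ext. intros; ring. }
rewrite E in H. fold K0 in H.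
assert (E2 : V * (rsum S mu - M) = Rabs (K0 - a) + 1) by (unfold V; field; lra).
assert (K0 - a <= Rabs (K0 - a)) by apply Rle_abs.
assert (a <= K0 + M * V - V * rsum S mu) by (unfold K0 in *; lra).
nra. Qed.

Lemma p1_subgrad n S c A (X : vec -> Prop) y M mu a :
  p1_dual_ge n S c A X y M mu a -> (forall s, (s < S)%nat -> 0 <= mu s) ->
  forall y' z' v', p1_feas n S A X y' z' v' -> a <= p1_cost n c M z' v' + rsum S (fun s => mu s * (y' s - y s)).
Proof. intros H Hmu y' z' v' [Hc [Hv Hf]]. specialize (H z' v' Hc Hv). unfold p1_lagr in H.
assert (E : rsum S (fun s => mu s * (dot n (A s) z' - y s - v')) = rsum S (fun s => mu s * (dot n (A s) z' - y' s - v')) + rsum S (fun s => mu s * (y' s - y s))).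
{ rewrite <- rsum_plus. apply rsum_ext. intros; ring. }
assert (rsum S (fun s => mu s * (dot n (A s) z' - y' s - v')) <= 0).
{ rewrite <- (Rmult_0_r (INR S)). apply rsum_le_const. intros s Hs. specialize (Hmu s Hs). specialize (Hf s Hs). nra. }
lra. Qed.


Definition sum3 (N S : nat) (F : nat -> nat -> nat -> R) : R :=
  rsum N (fun i => rsum N (fun j => rsum S (fun s => F i j s))).

Lemma sum3_ext N S F G : (forall i j s, (i < N)%nat -> (j < N)%nat -> (s < S)%nat -> F i j s = G i j s) -> sum3 N S F = sum3 N S G.
Proof. intros H. unfold sum3. apply rsum_ext; intros i Hi. apply rsum_ext; intros j Hj. apply rsum_ext; intros s Hs. auto. Qed.

Lemma sum3_le N S F G : (forall i j s, (i < N)%nat -> (j < N)%nat -> (s < S)%nat -> F i j s <= G i j s) -> sum3 N S F <= sum3 N S G.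
Proof. intros H. unfold sum3. apply rsum_le; intros i Hi. apply rsum_le; intros j Hj. apply rsum_le; intros s Hs. auto. Qed.

Lemma sum3_plus N S F G : sum3 N S (fun i j s => F i j s + G i j s) = sum3 N S F + sum3 N S G.
Proof. unfold sum3. rewrite <- rsum_plus. apply rsum_ext; intros i Hi. rewrite <- rsum_plus. apply rsum_ext; intros j Hj. apply rsum_plus. Qed.

Lemma sum3_scal N S a F : sum3 N S (fun i j s => a * F i j s) = a * sum3 N S F.
Proof. unfold sum3. rewrite <- rsum_scal. apply rsum_ext; intros i Hi. rewrite <- rsum_scal. apply rsum_ext; intros j Hj. apply rsum_scal. Qed.

Lemma sum3_const N S a : sum3 N S (fun _ _ _ => a) = INR N * INR N * INR S * a.
Proof. unfold sum3. rewrite (rsum_ext N _ (fun _ => INR N * (INR S * a))). rewrite rsum_const. ring.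
intros i _. rewrite (rsum_ext N _ (fun _ => INR S * a)). apply rsum_const. intros; apply rsum_const. Qed.

Lemma sum3_term_le N S F i j s : (forall i j s, (i < N)%nat -> (j < N)%nat -> (s < S)%nat -> 0 <= F i j s) ->
  (i < N)%nat -> (j < N)%nat -> (s < S)%nat -> F i j s <= sum3 N S F.
Proof. intros H Hi Hj Hs. unfold sum3.
eapply Rle_trans; [|apply (rsum_term_le N _ i)]; auto.
- eapply Rle_trans; [|apply (rsum_term_le N _ j)]; auto.
  + apply (rsum_term_le S (fun s => F i j s) s); auto.
  + intros; apply rsum_nonneg; auto.
- intros; apply rsum_nonneg; intros; apply rsum_nonneg; auto. Qed.

Lemma sum3_sq_expand N S F G a : sum3 N S (fun i j s => (F i j s + a * G i j s) ^ 2) =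
  sum3 N S (fun i j s => F i j s ^ 2) + 2 * a * sum3 N S (fun i j s => F i j s * G i j s) + a ^ 2 * sum3 N S (fun i j s => G i j s ^ 2).
Proof. rewrite <- (sum3_scal N S (2 * a)), <- (sum3_scal N S (a ^ 2)), <- !sum3_plus. apply sum3_ext. intros; ring. Qed.

Lemma cross_lemma N S (adj : nat -> nat -> bool) (mu : nat -> vec) (del : nat -> nat -> vec) : (forall a b, adj a b = adj b a) ->
  sum3 N S (fun i j s => del i j s * (if adj i j then mu i s - mu j s else 0)) =
  rsum N (fun i => rsum S (fun s => mu i s * Bop N adj del i s)).
Proof. intros Hsym.
assert (E1 : sum3 N S (fun i j s => del i j s * (if adj i j then mu i s - mu j s else 0)) =
  sum3 N S (fun i j s => if adj i j then del i j s * mu i s else 0) - sum3 N S (fun i j s => if adj i j then del i j s * mu j s else 0)).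
{ unfold sum3. rewrite <- rsum_minus. apply rsum_ext; intros i Hi. rewrite <- rsum_minus. apply rsum_ext; intros j Hj.
  rewrite <- rsum_minus. apply rsum_ext; intros s Hs. destruct (adj i j); ring. }
assert (E2 : sum3 N S (fun i j s => if adj i j then del i j s * mu j s else 0) =
  sum3 N S (fun i j s => if adj i j then del j i s * mu i s else 0)).
{ unfold sum3. rewrite (rsum_swap N N (fun i j => rsum S (fun s => if adj i j then del i j s * mu j s else 0))). apply rsum_ext; intros i Hi. apply rsum_ext; intros j Hj. apply rsum_ext; intros s Hs.
  rewrite Hsym. auto. }
rewrite E1, E2. unfold sum3. rewrite <- rsum_minus. apply rsum_ext; intros i Hi.
rewrite <- rsum_minus. unfold Bop.
rewrite (rsum_ext N _ (fun j => rsum S (fun s => (if adj i j then del i j s * mu i s else 0) - (if adj i j then del j i s * mu i s else 0)))).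
2:{ intros j Hj. rewrite rsum_minus. auto. }
rewrite (rsum_swap N S (fun j s => (if adj i j then del i j s * mu i s else 0) - (if adj i j then del j i s * mu i s else 0))).
apply rsum_ext; intros s Hs. rewrite <- rsum_scal. apply rsum_ext; intros j Hj. destruct (adj i j); ring. Qed.

Fixpoint lamseq (alpha : nat -> R) (adj : nat -> nat -> bool) (mu : nat -> nat -> vec) (t : nat) : nat -> nat -> vec :=
  match t with
  | O => fun _ _ _ => 0
  | S t' => fun i j s => lamseq alpha adj mu t' i j s + alpha t' / 2 * (if adj i j then mu t' i s - mu t' j s else 0)
  end.

Lemma y_rep N S (adj : nat -> nat -> bool) (alpha : nat -> R) (mu : nat -> nat -> vec) (y : nat -> nat -> vec) : (forall a b, adj a b = adj b a) ->
  (forall t i s, (i < N)%nat -> (s < S)%nat ->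
       y (t + 1)%nat i s = y t i s + alpha t * rsum N (fun j => if adj i j then mu t i s - mu t j s else 0)) ->
  forall t i s, (i < N)%nat -> (s < S)%nat -> y t i s = y O i s + Bop N adj (lamseq alpha adj mu t) i s.
Proof. intros Hsym Hy t. induction t; intros i s Hi Hs.
- simpl. unfold Bop. rewrite (rsum_ext N _ (fun _ => 0)). rewrite rsum_const. ring. intros; destruct (adj i i0); ring.
- rewrite <- Nat.add_1_r, Hy by auto. rewrite IHt by auto.
  rewrite Nat.add_1_r. change (lamseq alpha adj mu (Nat.succ t)) with (fun a b u => lamseq alpha adj mu t a b u + (fun a' b' u' => alpha t / 2 * (if adj a' b' then mu t a' u' - mu t b' u' else 0)) a b u). rewrite (Bop_plus N adj (lamseq alpha adj mu t) (fun a b u => alpha t / 2 * (if adj a b then mu t a u - mu t b u else 0))).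
  rewrite Rplus_assoc. f_equal. f_equal. unfold Bop. rewrite <- rsum_scal. apply rsum_ext. intros j Hj.
  rewrite (Hsym j i). destruct (adj i j); field. Qed.


Lemma lpr_mult N S (n : nat -> nat) (X : nat -> vec -> Prop) (c : nat -> vec) (A : nat -> nat -> vec) (u0 : vec)
  (zs zhat : nat -> vec) (zeta : R) :
  (forall i, (i < N)%nat -> in_conv (n i) (X i) (zs i)) ->
  (forall s, (s < S)%nat -> rsum N (fun i => dot (n i) (A i s) (zs i)) <= u0 s) ->
  (forall z : nat -> vec, (forall i, (i < N)%nat -> in_conv (n i) (X i) (z i)) ->
     (forall s, (s < S)%nat -> rsum N (fun i => dot (n i) (A i s) (z i)) <= u0 s) ->
     rsum N (fun i => dot (n i) (c i) (zs i)) <= rsum N (fun i => dot (n i) (c i) (z i))) ->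
  (forall i, (i < N)%nat -> in_conv (n i) (X i) (zhat i)) -> 0 < zeta ->
  (forall s, (s < S)%nat -> zeta <= u0 s - rsum N (fun i => dot (n i) (A i s) (zhat i))) ->
  exists pi : vec, (forall s, (s < S)%nat -> 0 <= pi s) /\
   forall z : nat -> vec, (forall i, (i < N)%nat -> in_conv (n i) (X i) (z i)) ->
    rsum N (fun i => dot (n i) (c i) (zs i)) <= rsum N (fun i => dot (n i) (c i) (z i)) +
      rsum S (fun s => pi s * (rsum N (fun i => dot (n i) (A i s) (z i)) - u0 s)).
Proof. intros Hzs Hzsf Hopt Hzh Hze Hzeta.
set (P := fun (u : vec) a => exists z : nat -> vec, (forall i, (i < N)%nat -> in_conv (n i) (X i) (z i)) /\
     (forall s, (s < S)%nat -> rsum N (fun i => dot (n i) (A i s) (z i)) <= u s) /\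
     a = rsum N (fun i => dot (n i) (c i) (z i))).
destruct (hb S P u0 (rsum N (fun i => dot (n i) (c i) (zs i)))) as [g Hg].
- intros u1 u2 a1 a2 th Hth [z1 [C1 [F1 E1]]] [z2 [C2 [F2 E2]]].
  exists (fun i k => th * z1 i k + (1 - th) * z2 i k). split; [|split].
  + intros i Hi. apply conv_comb; auto.
  + intros s Hs. rewrite (rsum_ext N _ (fun i => th * dot (n i) (A i s) (z1 i) + (1 - th) * dot (n i) (A i s) (z2 i))).
    rewrite rsum_plus, !rsum_scal. specialize (F1 s Hs). specialize (F2 s Hs). nra.
    intros i Hi. apply dot_lin.
  + subst. transitivity (rsum N (fun i => th * dot (n i) (c i) (z1 i) + (1 - th) * dot (n i) (c i) (z2 i))).
    rewrite rsum_plus, !rsum_scal. auto. apply rsum_ext. intros i Hi. symmetry. apply dot_lin.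
- intros u u' a Hu [z [C1 [F1 E1]]]. exists z. split; [auto|split; auto]. intros s Hs. rewrite <- Hu; auto.
- intros a [z [C1 [F1 ->]]]. apply Hopt; auto.
- intros k Hk. exists zeta. split; auto. split.
  + eexists. exists zhat. split; [auto|split; [|reflexivity]]. intros s Hs. specialize (Hzeta s Hs). unfold upd. destruct (Nat.eqb s k); lra.
  + eexists. exists zhat. split; [auto|split; [|reflexivity]]. intros s Hs. specialize (Hzeta s Hs). unfold upd. destruct (Nat.eqb s k); lra.
- exists (fun s => - g s). split.
  + intros s Hs. assert (H := Hg (fun s' => if Nat.eqb s' s then 1 else 0) (rsum N (fun i => dot (n i) (c i) (zs i)))).
    cbv beta in H. rewrite rsum_ind_mul in H by auto.
    enough (rsum N (fun i => dot (n i) (c i) (zs i)) + g s <= rsum N (fun i => dot (n i) (c i) (zs i))) by lra.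
    apply H. exists zs. split; [auto|split; [|auto]]. intros s' Hs'. specialize (Hzsf s' Hs'). destruct (Nat.eqb s' s); lra.
  + intros z Hz. assert (H := Hg (fun s => rsum N (fun i => dot (n i) (A i s) (z i)) - u0 s) (rsum N (fun i => dot (n i) (c i) (z i)))).
    assert (E : rsum S (fun s => - g s * (rsum N (fun i => dot (n i) (A i s) (z i)) - u0 s)) = - rsum S (fun s => g s * (rsum N (fun i => dot (n i) (A i s) (z i)) - u0 s))).
    { rewrite <- (Rmult_1_l (rsum S (fun s => g s * _))). rewrite Ropp_mult_distr_l. rewrite <- rsum_scal. apply rsum_ext. intros; ring. }
    rewrite E. enough (rsum N (fun i => dot (n i) (c i) (zs i)) + rsum S (fun s => g s * (rsum N (fun i => dot (n i) (A i s) (z i)) - u0 s)) <= rsum N (fun i => dot (n i) (c i) (z i))) by lra.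
    apply H. exists z. split; [auto|split; [|auto]]. intros s Hs. lra.
Qed.


Lemma antisym_sum N (f : nat -> nat -> R) : (forall i j, f i j = - f j i) ->
  rsum N (fun i => rsum N (fun j => f i j)) = 0.
Proof. intros H. assert (E : rsum N (fun i => rsum N (fun j => f i j)) = - rsum N (fun i => rsum N (fun j => f i j))).
{ rewrite (rsum_swap N N f) at 1. rewrite <- (Rmult_1_l (rsum N (fun i => rsum N (fun j => f i j)))).
  rewrite Ropp_mult_distr_l, <- rsum_scal. apply rsum_ext. intros i _. rewrite <- rsum_scal. apply rsum_ext. intros j _.
  rewrite H. ring. }
lra. Qed.

Lemma Bop_abs N (adj : nat -> nat -> bool) del i s rho : (forall j k, (j < N)%nat -> (k < N)%nat -> Rabs (del j k s) <= rho) ->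
  (i < N)%nat -> Rabs (Bop N adj del i s) <= 2 * INR N * rho.
Proof. intros H Hi. unfold Bop. eapply Rle_trans. apply rsum_abs.
replace (2 * INR N * rho) with (INR N * (2 * rho)) by ring. apply rsum_le_const. intros j Hj.
destruct (adj i j). eapply Rle_trans. apply Rabs_triang. rewrite Rabs_Ropp. pose proof (H i j Hi Hj). pose proof (H j i Hj Hi). lra.
rewrite Rabs_R0. pose proof (H i j Hi Hj). pose proof (Rabs_pos (del i j s)). lra. Qed.

Lemma eps_lower N (eps : nat -> R) : (forall i, (i < N)%nat -> 0 < eps i) -> exists e0, 0 < e0 /\ forall i, (i < N)%nat -> e0 <= eps i.
Proof. induction N; intros H.
- exists 1. split; [lra|]. intros; lia.
- destruct IHN as [e0 [He0 H0]]. intros; apply H; lia.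
  exists (Rmin e0 (eps N)). split. apply Rmin_glb_lt; auto. intros i Hi. destruct (Nat.eq_dec i N).
  + subst. apply Rmin_r.
  + eapply Rle_trans. apply Rmin_l. apply H0. lia. Qed.

Lemma abs_le_1sq x : Rabs x <= 1 + x ^ 2.
Proof. unfold Rabs. destruct (Rcase_abs x); nra. Qed.

Lemma sq_lt_abs x r : 0 < r -> x ^ 2 < r ^ 2 -> Rabs x < r.
Proof. intros Hr H. unfold Rabs. destruct (Rcase_abs x); nra. Qed.

Lemma abs_lt_sq x r : Rabs x < r -> x ^ 2 <= r ^ 2.
Proof. intros H. unfold Rabs in H. destruct (Rcase_abs x); nra. Qed.

Definition triples (N S : nat) : list (nat * nat * nat) :=
  flat_map (fun i => flat_map (fun j => map (fun s => (i, j, s)) (seq 0 S)) (seq 0 N)) (seq 0 N).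

Lemma in_triples N S i j s : (i < N)%nat -> (j < N)%nat -> (s < S)%nat -> In (i, j, s) (triples N S).
Proof. intros Hi Hj Hs. unfold triples. apply in_flat_map. exists i. split. apply in_seq; lia.
apply in_flat_map. exists j. split. apply in_seq; lia. apply in_map. apply in_seq; lia. Qed.

Lemma triple_dec : forall x y : nat * nat * nat, {x = y} + {x <> y}.
Proof. repeat decide equality. Qed.

Lemma abs_le_inv x a : Rabs x <= a -> - a <= x <= a.
Proof. unfold Rabs. destruct (Rcase_abs x); lra. Qed.


Lemma main_gen (N S : nat) (n : nat -> nat) (X : nat -> vec -> Prop) (c : nat -> vec) (A : nat -> nat -> vec)
  (b : vec) (JMILP r : R) (HN : (0 < N)%nat) (Hr : 0 <= r)
  (xm : nat -> vec) (Hxm : forall i, (i < N)%nat -> X i (xm i))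
  (Hxmf : forall s, (s < S)%nat -> rsum N (fun i => dot (n i) (A i s) (xm i)) <= b s)
  (Hxmc : rsum N (fun i => dot (n i) (c i) (xm i)) = JMILP)
  (zs : nat -> vec) (Hzs : forall i, (i < N)%nat -> in_conv (n i) (X i) (zs i))
  (Hzsf : forall s, (s < S)%nat -> rsum N (fun i => dot (n i) (A i s) (zs i)) <= b s - r)
  (Hzsopt : forall z : nat -> vec, (forall i, (i < N)%nat -> in_conv (n i) (X i) (z i)) ->
     (forall s, (s < S)%nat -> rsum N (fun i => dot (n i) (A i s) (z i)) <= b s - r) ->
     rsum N (fun i => dot (n i) (c i) (zs i)) <= rsum N (fun i => dot (n i) (c i) (z i)))
  (zhat : nat -> vec) (Hzh : forall i, (i < N)%nat -> in_conv (n i) (X i) (zhat i))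
  (zeta : R) (Hze : 0 < zeta)
  (Hzeta : forall s, (s < S)%nat -> zeta <= b s - r - rsum N (fun i => dot (n i) (A i s) (zhat i)))
  (cmax cmin : nat -> R)
  (Hcmax : forall i, (i < N)%nat -> forall x, X i x -> dot (n i) (c i) x <= cmax i)
  (Hcmin : forall i, (i < N)%nat -> forall x, X i x -> cmin i <= dot (n i) (c i) x) :
  exists Mbar : R, forall M : R, 0 < M -> Mbar <= M ->
  forall (adj : nat -> nat -> bool), connected_undirected N adj ->
  forall (alpha : nat -> R), (forall t, 0 <= alpha t) ->
    cv_infty (fun T => rsum T alpha) ->
    (exists l, Un_cv (fun T => rsum T (fun t => alpha t ^ 2)) l) ->
  forall (eps : nat -> R), (forall i, (i < N)%nat -> 0 < eps i) ->
  forall (y : nat -> nat -> vec) (z : nat -> nat -> vec) (v : nat -> nat -> R)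
         (mu : nat -> nat -> vec) (x : nat -> nat -> vec),
    (forall s, (s < S)%nat -> rsum N (fun i => y O i s) = b s - r) ->
    (forall t i, (i < N)%nat ->
       p1_pd_opt (n i) S (c i) (A i) (X i) (y t i) M (z t i) (v t i) (mu t i)) ->
    (forall t i s, (i < N)%nat -> (s < S)%nat ->
       y (t + 1)%nat i s = y t i s + alpha t *
         rsum N (fun j => if adj i j then mu t i s - mu t j s else 0)) ->
    (forall t i, (i < N)%nat ->
       p3_lex_opt (n i) S (c i) (A i) (X i) (y t i) (x t i)) ->
  exists T : nat, (0 < T)%nat /\ forall t, (T <= t)%nat ->
    rsum N (fun i => dot (n i) (c i) (x t i)) - JMILP <=
      rsum N (fun i => dot (n i) (c i) (x t i)
                       - (dot (n i) (c i) (z t i) + M * v t i))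
      + rsum N (fun i => norm1 S (mu t i) * eps i)
      + (/ zeta * rsum N (fun i => cmax i - cmin i)) * r.
Proof.
set (u0 := fun s => b s - r).
destruct (lpr_mult N S n X c A u0 zs zhat zeta Hzs Hzsf Hzsopt Hzh Hze Hzeta) as [pi [Hpi Kr]].
set (Jr := rsum N (fun i => dot (n i) (c i) (zs i))).
set (Gam := / zeta * rsum N (fun i => cmax i - cmin i)).
assert (Hpisum : rsum S pi <= Gam).
{ assert (H := Kr zhat Hzh).
  assert (H1 : rsum S (fun s => pi s * (rsum N (fun i => dot (n i) (A i s) (zhat i)) - u0 s)) <= rsum S (fun s => - zeta * pi s)).
  { apply rsum_le. intros s Hs. specialize (Hzeta s Hs). specialize (Hpi s Hs). unfold u0. nra. }
  rewrite rsum_scal in H1.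
  assert (H2 : rsum N (fun i => dot (n i) (c i) (zhat i)) <= rsum N cmax).
  { apply rsum_le. intros i Hi. apply dot_conv_le with (X i); auto. }
  assert (H3 : rsum N cmin <= Jr).
  { apply rsum_le. intros i Hi. apply dot_conv_ge with (X i); auto. }
  assert (H4 : zeta * rsum S pi <= rsum N (fun i => cmax i - cmin i)) by (rewrite rsum_minus; fold Jr in H; lra).
  unfold Gam. apply Rmult_le_reg_l with zeta; auto. rewrite <- Rmult_assoc, Rinv_r, Rmult_1_l by lra. auto. }
assert (Hpi0 : 0 <= rsum S pi) by (apply rsum_nonneg; auto).
assert (HJr : Jr <= JMILP + Gam * r).
{ assert (H := Kr xm (fun i Hi => conv_of_X _ _ _ (Hxm i Hi))). rewrite Hxmc in H.
  assert (H1 : rsum S (fun s => pi s * (rsum N (fun i => dot (n i) (A i s) (xm i)) - u0 s)) <= rsum S (fun s => r * pi s)).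
  { apply rsum_le. intros s Hs. specialize (Hxmf s Hs). specialize (Hpi s Hs). unfold u0. nra. }
  rewrite rsum_scal in H1. fold Jr in H. nra. }
exists Gam. intros M HM HMb adj Hconn alpha Hal Hinf [l Hl] eps Heps y z v mu x Hy0 Hpd Hupd Hp3.
pose proof Hconn as [Hsym [Hirr Hcr]].
assert (Pen : forall (yy zz : nat -> vec) (vv : nat -> R), (forall s, (s < S)%nat -> rsum N (fun i => yy i s) = u0 s) ->
   (forall i, (i < N)%nat -> p1_feas (n i) S (A i) (X i) (yy i) (zz i) (vv i)) ->
   Jr <= rsum N (fun i => p1_cost (n i) (c i) M (zz i) (vv i))).
{ intros yy zz vv Hs Hf. assert (H := Kr zz (fun i Hi => proj1 (Hf i Hi))).
  set (V := rsum N vv).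
  assert (HV : 0 <= V) by (apply rsum_nonneg; intros i Hi; apply (Hf i Hi)).
  assert (H1 : rsum S (fun s => pi s * (rsum N (fun i => dot (n i) (A i s) (zz i)) - u0 s)) <= rsum S (fun s => V * pi s)).
  { apply rsum_le. intros s Hs'. assert (T1 : rsum N (fun i => dot (n i) (A i s) (zz i)) <= rsum N (fun i => yy i s + vv i)).
    { apply rsum_le. intros i Hi. apply (Hf i Hi); auto. }
    rewrite rsum_plus, Hs in T1 by auto. specialize (Hpi s Hs'). fold V in T1. nra. }
  rewrite rsum_scal in H1. unfold p1_cost. rewrite rsum_plus, rsum_scal. fold V.  assert (V * rsum S pi <= V * M) by (apply Rmult_le_compat_l; lra). fold Jr in H. lra. }
set (Jt := fun t => rsum N (fun i => p1_cost (n i) (c i) M (z t i) (v t i))).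
assert (Hdg : forall t i, (i < N)%nat -> p1_dual_ge (n i) S (c i) (A i) (X i) (y t i) M (mu t i) (p1_cost (n i) (c i) M (z t i) (v t i))).
{ intros t i Hi. apply p1_strong; auto. }
assert (Hfeas : forall t i, (i < N)%nat -> p1_feas (n i) S (A i) (X i) (y t i) (z t i) (v t i)).
{ intros t i Hi. apply (Hpd t i Hi). }
assert (Hmu0 : forall t i s, (i < N)%nat -> (s < S)%nat -> 0 <= mu t i s).
{ intros t i s Hi Hs. apply (Hpd t i Hi); auto. }
assert (HmuM : forall t i s, (i < N)%nat -> (s < S)%nat -> mu t i s <= M).
{ intros t i s Hi Hs. assert (H1 : rsum S (mu t i) <= M).
  { eapply p1_mu_bound. apply Hdg; auto. apply (Hfeas t i Hi). }
  assert (H2 : mu t i s <= rsum S (mu t i)) by (apply rsum_term_le; auto; intros; apply Hmu0; auto). lra. }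
assert (Hysum : forall t s, (s < S)%nat -> rsum N (fun i => y t i s) = u0 s).
{ induction t; intros s Hs. apply Hy0; auto.
  rewrite <- Nat.add_1_r. rewrite (rsum_ext N _ (fun i => y t i s + alpha t * rsum N (fun j => if adj i j then mu t i s - mu t j s else 0))).
  rewrite rsum_plus, rsum_scal, IHt by auto. rewrite antisym_sum. ring.
  intros i j. rewrite (Hsym j i). destruct (adj i j); ring.
  intros i Hi. apply Hupd; auto. }
assert (He0 : forall t, 0 <= Jt t - Jr).
{ intros t. enough (Jr <= Jt t) by lra. apply (Pen (y t)); auto. }
assert (Hsub : forall t (yy zz : nat -> vec) (vv : nat -> R), (forall i, (i < N)%nat -> p1_feas (n i) S (A i) (X i) (yy i) (zz i) (vv i)) ->
   Jt t <= rsum N (fun i => p1_cost (n i) (c i) M (zz i) (vv i)) + rsum N (fun i => rsum S (fun s => mu t i s * (yy i s - y t i s)))).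
{ intros t yy zz vv Hf. unfold Jt. rewrite <- rsum_plus. apply rsum_le. intros i Hi.
  eapply p1_subgrad; eauto. }
set (Minp := fun (yy : nat -> vec) => forall eta, 0 < eta -> exists (zz : nat -> vec) (vv : nat -> R),
   (forall i, (i < N)%nat -> p1_feas (n i) S (A i) (X i) (yy i) (zz i) (vv i)) /\
   rsum N (fun i => p1_cost (n i) (c i) M (zz i) (vv i)) <= Jr + eta).
assert (Hcross : forall t yy, Minp yy -> rsum N (fun i => rsum S (fun s => mu t i s * (y t i s - yy i s))) <= Jr - Jt t).
{ intros t yy Hm. apply le_epsilon. intros eta Heta. destruct (Hm eta Heta) as [zz [vv [Hf Hc]]].
  assert (H := Hsub t yy zz vv Hf).
  assert (E : rsum N (fun i => rsum S (fun s => mu t i s * (y t i s - yy i s))) = - rsum N (fun i => rsum S (fun s => mu t i s * (yy i s - y t i s)))).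
  { rewrite <- (Rmult_1_l (rsum N (fun i => rsum S (fun s => mu t i s * (yy i s - y t i s))))).
    rewrite Ropp_mult_distr_l, <- rsum_scal. apply rsum_ext. intros i _. rewrite <- rsum_scal. apply rsum_ext. intros; ring. }
  lra. }
set (lam := lamseq alpha adj mu).
assert (Hyrep : forall t i s, (i < N)%nat -> (s < S)%nat -> y t i s = y O i s + Bop N adj (lam t) i s).
{ apply y_rep; auto. }
set (Cc := INR N * INR N * INR S * M ^ 2 / 4).
assert (HCc : 0 <= Cc) by (unfold Cc; pose proof (pos_INR N); pose proof (pos_INR S); apply Rmult_le_pos; [|lra];
   apply Rmult_le_pos; [|apply pow2_ge_0]; apply Rmult_le_pos; [apply Rmult_le_pos|]; auto).
set (Dist := fun (l1 l2 : nat -> nat -> vec) => sum3 N S (fun i j s => (l1 i j s - l2 i j s) ^ 2)).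
assert (Fej : forall ls : nat -> nat -> vec, Minp (fun i s => y O i s + Bop N adj ls i s) ->
   forall t, Dist (lam (Datatypes.S t)) ls <= Dist (lam t) ls - alpha t * (Jt t - Jr) + alpha t ^ 2 * Cc).
{ intros ls Hm t. unfold Dist.
  set (h := fun i j s => if adj i j then mu t i s - mu t j s else 0).
  rewrite (sum3_ext N S _ (fun i j s => ((lam t i j s - ls i j s) + (alpha t / 2) * h i j s) ^ 2)).
  2:{ intros i j s _ _ _. unfold lam. simpl lamseq. unfold h. ring. }
  rewrite sum3_sq_expand. unfold h. rewrite cross_lemma by auto.
  assert (Hc := Hcross t _ Hm).
  assert (E : rsum N (fun i => rsum S (fun s => mu t i s * Bop N adj (fun a b u => lam t a b u - ls a b u) i s))
            = rsum N (fun i => rsum S (fun s => mu t i s * (y t i s - (y O i s + Bop N adj ls i s))))).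
  { apply rsum_ext; intros i Hi. apply rsum_ext; intros s Hs. rewrite Bop_minus, (Hyrep t i s Hi Hs). ring. }
  rewrite E.
  assert (Hh : sum3 N S (fun i j s => (if adj i j then mu t i s - mu t j s else 0) ^ 2) <= INR N * INR N * INR S * M ^ 2).
  { rewrite <- sum3_const. apply sum3_le. intros i j s Hi Hj Hs. destruct (adj i j).
    - pose proof (Hmu0 t i s Hi Hs). pose proof (Hmu0 t j s Hj Hs). pose proof (HmuM t i s Hi Hs). pose proof (HmuM t j s Hj Hs). nra.
    - simpl. nra. }
  assert (0 <= alpha t) by auto. unfold Cc.
  assert ((alpha t / 2) ^ 2 * sum3 N S (fun i j s => (if adj i j then mu t i s - mu t j s else 0) ^ 2) <= (alpha t / 2) ^ 2 * (INR N * INR N * INR S * M ^ 2)).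
  { apply Rmult_le_compat_l; auto. apply pow2_ge_0. }
  assert (2 * (alpha t / 2) * rsum N (fun i => rsum S (fun s => mu t i s * (y t i s - (y O i s + Bop N adj ls i s)))) <= 2 * (alpha t / 2) * (Jr - Jt t)).
  { apply Rmult_le_compat_l; lra. }
  lra. }
set (Tz := fun s => rsum N (fun k => dot (n k) (A k s) (zs k))).
set (ystar := fun i s => dot (n i) (A i s) (zs i) + (if Nat.eqb i 0 then u0 s - Tz s else 0)).
destruct (zero_sum_rep N S adj (fun i s => ystar i s - y O i s) HN Hconn) as [lst Hlst].
{ intros s Hs. rewrite rsum_minus, Hy0 by auto. unfold ystar. rewrite rsum_plus.
  rewrite (rsum_ind N (fun _ => u0 s - Tz s) 0 HN). unfold Tz, u0. ring. }
assert (Hmst : Minp (fun i s => y O i s + Bop N adj lst i s)).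
{ intros eta Heta. exists zs, (fun _ => 0). split.
  - intros i Hi. split; [auto|split; [lra|]]. intros s Hs. rewrite Hlst by auto. unfold ystar.
    assert (0 <= u0 s - Tz s) by (unfold Tz, u0; specialize (Hzsf s Hs); lra).
    destruct (Nat.eqb i 0); lra.
  - unfold p1_cost. rewrite (rsum_ext N _ (fun i => dot (n i) (c i) (zs i))) by (intros; ring). fold Jr. lra. }
set (Dst := fun t => Dist (lam t) lst).
assert (HDst0 : forall t, 0 <= Dst t).
{ intros t. unfold Dst, Dist, sum3. apply rsum_nonneg; intros; apply rsum_nonneg; intros; apply rsum_nonneg; intros; apply pow2_ge_0. }
assert (FejS := Fej lst Hmst).
set (B0 := Dst O + Cc * l).
assert (HB0 : forall t, Dst t <= B0).
{ intros t. assert (H0 := fejer_partial Dst (fun t => Jt t - Jr) alpha Cc FejS O t).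
  assert (H : Dst t <= Dst O - rsum t (fun j => alpha j * (Jt j - Jr)) + Cc * rsum t (fun j => alpha j ^ 2)) by exact H0.
  assert (rsum t (fun j => alpha j * (Jt j - Jr)) >= 0).
  { apply Rle_ge, rsum_nonneg. intros j _. apply Rmult_le_pos; auto. }
  assert (Cc * rsum t (fun j => alpha j ^ 2) <= Cc * l) by (apply Rmult_le_compat_l; auto; apply psum_le; auto).
  unfold B0. lra. }
assert (Hlim := liminf_e Dst (fun t => Jt t - Jr) alpha Cc l HDst0 He0 Hal HCc FejS Hinf Hl).
assert (Ex : forall k, exists t, (k <= t)%nat /\ Jt t - Jr < / (INR k + 1)).
{ intros k. apply Hlim. apply Rinv_0_lt_compat. pose proof (pos_INR k). lra. }
set (phi0 := fun k => proj1_sig (constructive_indefinite_description _ (Ex k))).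
assert (Hphi0 : forall k, (k <= phi0 k)%nat /\ Jt (phi0 k) - Jr < / (INR k + 1)).
{ intros k. unfold phi0. destruct (constructive_indefinite_description _ (Ex k)) as [p Hp]. simpl. auto. }
destruct (bwL triple_dec (triples N S) (fun k (q : nat * nat * nat) => lam (phi0 k) (fst (fst q)) (snd (fst q)) (snd q))
   (fun q => Rabs (lst (fst (fst q)) (snd (fst q)) (snd q)) + 1 + B0)) as [phi [lb [Hphi Hconv]]].
{ intros k [[i j] s] Hq. simpl. unfold triples in Hq.
  apply in_flat_map in Hq as [i' [Hi' Hq]]. apply in_flat_map in Hq as [j' [Hj' Hq]]. apply in_map_iff in Hq as [s' [Eq Hs']].
  injection Eq as Ei Ej Es. subst i j s. apply in_seq in Hi'. apply in_seq in Hj'. apply in_seq in Hs'.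
  assert (H1 : (lam (phi0 k) i' j' s' - lst i' j' s') ^ 2 <= Dst (phi0 k)).
  { unfold Dst, Dist. apply (sum3_term_le N S (fun i j s => (lam (phi0 k) i j s - lst i j s) ^ 2)); try lia. intros; apply pow2_ge_0. }
  pose proof (HB0 (phi0 k)). pose proof (abs_le_1sq (lam (phi0 k) i' j' s' - lst i' j' s')).
  assert (Rabs (lam (phi0 k) i' j' s') <= Rabs (lam (phi0 k) i' j' s' - lst i' j' s') + Rabs (lst i' j' s')).
  { replace (lam (phi0 k) i' j' s') with ((lam (phi0 k) i' j' s' - lst i' j' s') + lst i' j' s') at 1 by ring. apply Rabs_triang. }
  lra. }
set (lbar := fun i j s => lb (i, j, s)).
set (tau := fun k => phi0 (phi k)).
assert (Htau : forall k, (k <= tau k)%nat /\ Jt (tau k) - Jr < / (INR k + 1)).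
{ intros k. unfold tau. destruct (Hphi0 (phi k)) as [H1 H2]. specialize (Hphi k). split. lia.
  eapply Rlt_le_trans. exact H2. apply Rinv_le_contravar. pose proof (pos_INR k). lra. apply le_INR in Hphi. lra. }
assert (Hunif : forall e, 0 < e -> exists K, forall k, (K <= k)%nat -> forall i j s, (i < N)%nat -> (j < N)%nat -> (s < S)%nat ->
    Rabs (lam (tau k) i j s - lbar i j s) < e).
{ intros e He. destruct (unifL (triples N S) _ lb Hconv e He) as [K HK]. exists K. intros k Hk i j s Hi Hj Hs.
  apply (HK k Hk (i, j, s)). apply in_triples; auto. }
set (ybar := fun i s => y O i s + Bop N adj lbar i s).
assert (HNpos : 0 < INR N) by (apply lt_0_INR; auto).
assert (Hmb : Minp ybar).
{ intros eta Heta. set (rho := eta / (4 * M * INR N * INR N)).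
  assert (Hrho : 0 < rho) by (unfold rho; apply Rdiv_lt_0_compat; auto; apply Rmult_lt_0_compat; [apply Rmult_lt_0_compat|]; auto; lra).
  destruct (Hunif rho Hrho) as [K1 HK1]. destruct (small_inv (eta / 2) ltac:(lra)) as [K2 HK2].
  set (k := Nat.max K1 K2). destruct (Htau k) as [Hk1 Hk2].
  exists (z (tau k)), (fun i => v (tau k) i + 2 * INR N * rho). split.
  - intros i Hi. destruct (Hfeas (tau k) i Hi) as [Hc [Hv Hf]]. split; [auto|split].
    + pose proof (pos_INR N). nra.
    + intros s Hs. specialize (Hf s Hs). rewrite Hyrep in Hf by auto. unfold ybar.
      assert (Hb : Rabs (Bop N adj (fun a b u => lam (tau k) a b u - lbar a b u) i s) <= 2 * INR N * rho).
      { apply Bop_abs; auto. intros j j' Hj Hj'. left. apply HK1; auto. lia. }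
      rewrite Bop_minus in Hb. apply abs_le_inv in Hb. lra.
  - unfold p1_cost. rewrite (rsum_ext N _ (fun i => p1_cost (n i) (c i) M (z (tau k) i) (v (tau k) i) + M * (2 * INR N * rho))).
    2:{ intros i Hi. unfold p1_cost. ring. }
    rewrite rsum_plus, rsum_const. fold (Jt (tau k)).
    assert (E : INR N * (M * (2 * INR N * rho)) = eta / 2) by (unfold rho; field; lra). rewrite E.
    assert (/ (INR k + 1) <= / (INR K2 + 1)).
    { apply Rinv_le_contravar. pose proof (pos_INR K2). lra. assert (K2 <= k)%nat by (unfold k; lia). apply le_INR in H. lra. }
    lra. }
assert (FejB := Fej lbar Hmb).
set (Db := fun t => Dist (lam t) lbar).
destruct (eps_lower N eps Heps) as [e0 [He0p He0le]].
set (rp := e0 / (2 * INR N)).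
assert (Hrp : 0 < rp) by (unfold rp; apply Rdiv_lt_0_compat; lra).
set (Q := INR N * INR N * INR S).
assert (HQ : 0 <= Q) by (unfold Q; pose proof (pos_INR S); pose proof (pos_INR N); apply Rmult_le_pos; [apply Rmult_le_pos|]; lra).
set (r2 := rp / (2 * (Q + 1))).
assert (Hr2 : 0 < r2) by (unfold r2; apply Rdiv_lt_0_compat; lra).
destruct (tail_small alpha l Hl (rp ^ 2 / (2 * (Cc + 1)))) as [T1 HT1].
{ apply Rdiv_lt_0_compat. apply pow_lt; auto. lra. }
destruct (Hunif r2 Hr2) as [K3 HK3].
set (k := Nat.max T1 K3).
set (t0 := tau k).
assert (Ht0 : (T1 <= t0)%nat) by (unfold t0; destruct (Htau k); unfold k in *; lia).
assert (HDb0 : Db t0 <= rp ^ 2 / 4).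
{ unfold Db, Dist. eapply Rle_trans. apply (sum3_le N S _ (fun _ _ _ => r2 ^ 2)).
  - intros i j s Hi Hj Hs. apply abs_lt_sq. apply HK3; auto. unfold k; lia.
  - rewrite sum3_const. fold Q. unfold r2.
    replace (Q * (rp / (2 * (Q + 1))) ^ 2) with (rp ^ 2 / 4 * (Q / (Q + 1)) * / (Q + 1)) by (field; lra).
    assert (Q / (Q + 1) <= 1) by (apply Rmult_le_reg_r with (Q + 1); [lra|]; unfold Rdiv; rewrite Rmult_assoc, Rinv_l by lra; lra).
    assert (/ (Q + 1) <= 1) by (rewrite <- Rinv_1; apply Rinv_le_contravar; lra).
    assert (0 <= Q / (Q + 1)) by (apply Rmult_le_pos; [lra|left; apply Rinv_0_lt_compat; lra]).
    assert (0 <= / (Q + 1)) by (left; apply Rinv_0_lt_compat; lra).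
    assert (0 <= rp ^ 2 / 4) by (apply Rmult_le_pos; [apply pow2_ge_0|lra]).
    assert (rp ^ 2 / 4 * (Q / (Q + 1)) <= rp ^ 2 / 4) by (rewrite <- (Rmult_1_r (rp ^ 2 / 4)) at 2; apply Rmult_le_compat_l; lra).
    assert (rp ^ 2 / 4 * (Q / (Q + 1)) * / (Q + 1) <= rp ^ 2 / 4 * (Q / (Q + 1))) by (rewrite <- (Rmult_1_r (rp ^ 2 / 4 * (Q / (Q + 1)))) at 2; apply Rmult_le_compat_l; nra).
    lra. }
assert (HDb : forall t, (t0 <= t)%nat -> Db t < rp ^ 2).
{ intros t Ht. assert (FB : forall t, Db (Datatypes.S t) <= Db t - alpha t * (Jt t - Jr) + alpha t ^ 2 * Cc) by exact FejB.
  assert (H := fejer_partial Db (fun t => Jt t - Jr) alpha Cc FB t0 (t - t0)).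
  replace (t0 + (t - t0))%nat with t in H by lia.
  assert (rsum (t - t0) (fun j => alpha (t0 + j)%nat * (Jt (t0 + j)%nat - Jr)) >= 0).
  { apply Rle_ge, rsum_nonneg. intros j _. apply Rmult_le_pos; auto. }
  assert (Hs := HT1 t0 (t - t0)%nat Ht0).
  assert (0 <= rsum (t - t0) (fun j => alpha (t0 + j)%nat ^ 2)) by (apply rsum_nonneg; intros; apply pow2_ge_0).
  assert (Cc * rsum (t - t0) (fun j => alpha (t0 + j)%nat ^ 2) <= (Cc + 1) * rsum (t - t0) (fun j => alpha (t0 + j)%nat ^ 2)) by nra.
  assert ((Cc + 1) * rsum (t - t0) (fun j => alpha (t0 + j)%nat ^ 2) < (Cc + 1) * (rp ^ 2 / (2 * (Cc + 1)))) by (apply Rmult_lt_compat_l; lra).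
  assert (E : (Cc + 1) * (rp ^ 2 / (2 * (Cc + 1))) = rp ^ 2 / 2) by (field; lra).
  assert (0 < rp ^ 2) by (apply pow_lt; auto).
  lra. }
assert (Hclose : forall t, (t0 <= t)%nat -> forall i s, (i < N)%nat -> (s < S)%nat -> Rabs (ybar i s - y t i s) <= e0).
{ intros t Ht i s Hi Hs. rewrite (Hyrep t i s Hi Hs). unfold ybar.
  assert (Hb : Rabs (Bop N adj (fun a b u => lam t a b u - lbar a b u) i s) <= 2 * INR N * rp).
  { apply Bop_abs; auto. intros j j' Hj Hj'. left. apply sq_lt_abs; auto.
    eapply Rle_lt_trans; [|apply (HDb t Ht)]. unfold Db, Dist.
    apply (sum3_term_le N S (fun i j s => (lam t i j s - lbar i j s) ^ 2)); auto. intros; apply pow2_ge_0. }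
  rewrite Bop_minus in Hb. replace (2 * INR N * rp) with e0 in Hb by (unfold rp; field; lra).
  replace (y O i s + Bop N adj lbar i s - (y O i s + Bop N adj (lam t) i s)) with (- (Bop N adj (lam t) i s - Bop N adj lbar i s)) by ring.
  rewrite Rabs_Ropp. auto. }
exists (Datatypes.S t0). split; [lia|]. intros t Ht.
assert (Hfin : Jt t <= Jr + rsum N (fun i => norm1 S (mu t i) * eps i)).
{ apply le_epsilon. intros eta Heta. destruct (Hmb eta Heta) as [zz [vv [Hf Hc]]].
  assert (H := Hsub t ybar zz vv Hf).
  assert (H2 : rsum N (fun i => rsum S (fun s => mu t i s * (ybar i s - y t i s))) <= rsum N (fun i => norm1 S (mu t i) * eps i)).
  { apply rsum_le. intros i Hi. unfold norm1. rewrite Rmult_comm, <- rsum_scal. apply rsum_le. intros s Hs.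
    pose proof (Hclose t ltac:(lia) i s Hi Hs). pose proof (He0le i Hi). pose proof (Hmu0 t i s Hi Hs).
    rewrite Rabs_pos_eq by auto. apply abs_le_inv in H0. nra. }
  lra. }
assert (E : rsum N (fun i => dot (n i) (c i) (x t i) - (dot (n i) (c i) (z t i) + M * v t i)) = rsum N (fun i => dot (n i) (c i) (x t i)) - Jt t).
{ unfold Jt, p1_cost. apply (rsum_minus N (fun i => dot (n i) (c i) (x t i)) (fun i => dot (n i) (c i) (z t i) + M * v t i)). }
rewrite E. fold Gam. lra.
Qed.

Theorem theorem4
  (* data: N agents, S coupling constraints *)
  (N S : nat) (Zd Rd Kd : nat -> nat)
  (c : nat -> vec) (A : nat -> nat -> vec) (* A i s = row s of A_i *)
  (D : nat -> nat -> vec) (d : nat -> vec) (b : vec)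
  (* X_i nonempty compact *)
  (HX : forall i, (i < N)%nat ->
     (exists x, mixed_int_poly (Zd i) (Rd i) (Kd i) (D i) (d i) x) /\
     compact_set (Zd i + Rd i) (mixed_int_poly (Zd i) (Rd i) (Kd i) (D i) (d i)))
  (* MILP feasible, with optimal cost JMILP *)
  (HMILPfeas : exists x : nat -> vec,
     (forall i, (i < N)%nat -> mixed_int_poly (Zd i) (Rd i) (Kd i) (D i) (d i) (x i)) /\
     forall s, (s < S)%nat -> rsum N (fun i => dot (Zd i + Rd i) (A i s) (x i)) <= b s)
  (JMILP : R)
  (HJ : is_min_value
     (fun x : nat -> vec =>
        (forall i, (i < N)%nat -> mixed_int_poly (Zd i) (Rd i) (Kd i) (D i) (d i) (x i)) /\
        forall s, (s < S)%nat -> rsum N (fun i => dot (Zd i + Rd i) (A i s) (x i)) <= b s)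
     (fun x => rsum N (fun i => dot (Zd i + Rd i) (c i) (x i))) JMILP)
  (* restriction *)
  (L : nat -> vec)
  (HL : forall i s, (i < N)%nat -> (s < S)%nat ->
     is_min_value (mixed_int_poly (Zd i) (Rd i) (Kd i) (D i) (d i))
       (fun x => dot (Zd i + Rd i) (A i s) x) (L i s))
  (xL : nat -> vec) (lt : nat -> R)
  (HxL : forall i, (i < N)%nat ->
     (mixed_int_poly (Zd i) (Rd i) (Kd i) (D i) (d i) (xL i) /\
      forall s, (s < S)%nat -> dot (Zd i + Rd i) (A i s) (xL i) - L i s <= lt i) /\
     forall x l, mixed_int_poly (Zd i) (Rd i) (Kd i) (D i) (d i) x ->
       (forall s, (s < S)%nat -> dot (Zd i + Rd i) (A i s) x - L i s <= l) -> lt i <= l)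
  (sigma : R)
  (Hsigma : exists m, is_max_value (fun p : nat * nat => (fst p < N)%nat /\ (snd p < S)%nat)
       (fun p => dot (Zd (fst p) + Rd (fst p)) (A (fst p) (snd p)) (xL (fst p)) - L (fst p) (snd p)) m
     /\ sigma = (INR S + 1) * m)
  (delta : R) (Hdelta : 0 < delta)
  (* Assumption A: LP_r with r = (sigma + delta) 1 feasible with unique optimum *)
  (HA : exists zs : nat -> vec,
     let feas := fun z : nat -> vec =>
       (forall i, (i < N)%nat -> in_conv (Zd i + Rd i) (mixed_int_poly (Zd i) (Rd i) (Kd i) (D i) (d i)) (z i)) /\
       forall s, (s < S)%nat -> rsum N (fun i => dot (Zd i + Rd i) (A i s) (z i)) <= b s - (sigma + delta) in
     let opt := fun z : nat -> vec => feas z /\ forall z', feas z' ->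
       rsum N (fun i => dot (Zd i + Rd i) (c i) (z i)) <= rsum N (fun i => dot (Zd i + Rd i) (c i) (z' i)) in
     opt zs /\ forall z', opt z' -> forall i k, (i < N)%nat -> (k < Zd i + Rd i)%nat -> z' i k = zs i k)
  (* Assumption C: Slater point zhat, with margin zeta *)
  (zhat : nat -> vec) (zeta : R)
  (Hzhat : forall i, (i < N)%nat ->
     in_conv (Zd i + Rd i) (mixed_int_poly (Zd i) (Rd i) (Kd i) (D i) (d i)) (zhat i))
  (Hzeta : is_min_value (fun s => (s < S)%nat)
     (fun s => b s - (sigma + delta) - rsum N (fun i => dot (Zd i + Rd i) (A i s) (zhat i))) zeta)
  (Hzeta_pos : 0 < zeta)
  (* max and min of the local costs over X_i *)
  (cmax cmin : nat -> R)
  (Hcmax : forall i, (i < N)%nat ->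
     is_max_value (mixed_int_poly (Zd i) (Rd i) (Kd i) (D i) (d i)) (dot (Zd i + Rd i) (c i)) (cmax i))
  (Hcmin : forall i, (i < N)%nat ->
     is_min_value (mixed_int_poly (Zd i) (Rd i) (Kd i) (D i) (d i)) (dot (Zd i + Rd i) (c i)) (cmin i)) :
  (* M sufficiently large *)
  exists Mbar : R, forall M : R, 0 < M -> Mbar <= M ->
  forall (adj : nat -> nat -> bool), connected_undirected N adj ->
  (* Assumption B *)
  forall (alpha : nat -> R), (forall t, 0 <= alpha t) ->
    cv_infty (fun T => rsum T alpha) ->
    (exists l, Un_cv (fun T => rsum T (fun t => alpha t ^ 2)) l) ->
  forall (eps : nat -> R), (forall i, (i < N)%nat -> 0 < eps i) ->
  (* algorithm run: y t i, z t i, v t i, mu t i, x t i *)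
  forall (y : nat -> nat -> vec) (z : nat -> nat -> vec) (v : nat -> nat -> R)
         (mu : nat -> nat -> vec) (x : nat -> nat -> vec),
    (forall s, (s < S)%nat -> rsum N (fun i => y O i s) = b s - (sigma + delta)) ->
    (forall t i, (i < N)%nat ->
       p1_pd_opt (Zd i + Rd i) S (c i) (A i) (mixed_int_poly (Zd i) (Rd i) (Kd i) (D i) (d i))
         (y t i) M (z t i) (v t i) (mu t i)) ->
    (forall t i s, (i < N)%nat -> (s < S)%nat ->
       y (t + 1)%nat i s = y t i s + alpha t *
         rsum N (fun j => if adj i j then mu t i s - mu t j s else 0)) ->
    (forall t i, (i < N)%nat ->
       p3_lex_opt (Zd i + Rd i) S (c i) (A i) (mixed_int_poly (Zd i) (Rd i) (Kd i) (D i) (d i))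
         (y t i) (x t i)) ->
  exists T : nat, (0 < T)%nat /\ forall t, (T <= t)%nat ->
    rsum N (fun i => dot (Zd i + Rd i) (c i) (x t i)) - JMILP <=
      rsum N (fun i => dot (Zd i + Rd i) (c i) (x t i)
                       - (dot (Zd i + Rd i) (c i) (z t i) + M * v t i))
      + rsum N (fun i => norm1 S (mu t i) * eps i)
      + (/ zeta * rsum N (fun i => cmax i - cmin i)) * (sigma + delta).
Proof.
assert (HN : (0 < N)%nat /\ 0 <= sigma).
{ destruct Hsigma as [m [[[p [[Hp1 Hp2] Ep]] _] Hs]]. split; [lia|].
  destruct (HxL (fst p) Hp1) as [[HxX _] _]. destruct (HL (fst p) (snd p) Hp1 Hp2) as [_ Hmin].
  specialize (Hmin (xL (fst p)) HxX). rewrite Hs. pose proof (pos_INR S). apply Rmult_le_pos; lra. }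
destruct HN as [HN Hsig0].
destruct HJ as [[xm [[Hxm Hxmf] Hxmc]] _].
destruct HA as [zs [[[Hzs Hzsf] Hzsopt] _]].
exact (main_gen N S (fun i => (Zd i + Rd i)%nat) (fun i => mixed_int_poly (Zd i) (Rd i) (Kd i) (D i) (d i)) c A b JMILP (sigma + delta)
  HN ltac:(lra) xm Hxm Hxmf Hxmc zs Hzs Hzsf (fun z' H1 H2 => Hzsopt z' (conj H1 H2)) zhat Hzhat zeta Hzeta_pos
  (fun s Hs => proj2 Hzeta s Hs) cmax cmin (fun i Hi => proj2 (Hcmax i Hi)) (fun i Hi => proj2 (Hcmin i Hi))).
Qed.
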